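(* Let $f$ and $g$ be arithmetic functions with $f$ multiplicative, and let $n$ be a positive integer such that $(\mathrm{Id}*f)(p^{\alpha})\neq 0$ for every prime power $p^{\alpha}\| n$. Then $$(f*\Phi_g)(n)=(\mathrm{Id}*f)(n)\sum_{p^{\alpha}\| n}\frac{(f*\Phi_g)(p^{\alpha})}{(\mathrm{Id}*f)(p^{\alpha})}.$$
   Context: $\mathbb{N}$ denotes the positive integers; $p^{\alpha}\|n$ means $p$ prime, $p^\alpha\mid n$, $p^{\alpha+1}\nmid n$, and sums over $p^\alpha\|n$ run over the prime-power factors of $n$. $\mathrm{Id}(n)=n$. Dirichlet convolution: $(u*v)(n)=\sum_{d\mid n}u(d)v(n/d)$. $f$ is multiplicative if $f(mn)=f(m)f(n)$ for coprime $m,n$. The additive transform of an arithmetic function $g$ is the function $\Phi_g:\mathbb{N}\to\mathbb{C}$ with $\Phi_g(p^{\alpha})=g(p^{\alpha})$ for every prime $p$ and $\alpha\ge1$, and $\Phi_g(nm)=n\Phi_g(m)+m\Phi_g(n)$ for coprime $m,n$; equivalently $\Phi_g(n)=n\sum_{p^{\alpha}\| n} g(p^{\alpha})/p^{\alpha}$. *)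

(* Defs.v *)
(* Arithmetic functions are maps nat -> C, only their values
   at positive integers matter.  C is the complex numbers R[i] over R : realType. *)
From mathcomp Require Import all_boot all_algebra.
From mathcomp Require Export complex reals.
Set Implicit Arguments. Unset Strict Implicit. Unset Printing Implicit Defensive.
Import GRing.Theory Num.Theory.
Local Open Scope ring_scope.

Section ArithFun.
Variable C : fieldType.

Definition dconv (u v : nat -> C) (n : nat) : C :=
  \sum_(d <- divisors n) u d * v (n %/ d)%N.

Definition Idf (n : nat) : C := n%:R.

Definition arith_multiplicative (f : nat -> C) : Prop :=
  forall m n : nat, (0 < m)%N -> (0 < n)%N -> coprime m n -> f (m * n)%N = f m * f n.

Definition Phi (g : nat -> C) (n : nat) : C :=
  n%:R * \sum_(p <- primes n) g (p ^ logn p n)%N / (p ^ logn p n)%:R.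
End ArithFun.

(* Main.v *)
Require Import Defs.
From mathcomp Require Import all_boot all_algebra.
From mathcomp Require Import complex reals.
From mathcomp Require Import ring.
Import GRing.Theory Num.Theory.
Local Open Scope ring_scope.
Local Open Scope complex_scope.
Set Implicit Arguments. Unset Strict Implicit.

Lemma divisors_pos n d : (0 < n)%N -> d \in divisors n -> (0 < d)%N.
Proof.
by move=> n0; rewrite -dvdn_divisors // => /(dvdn_gt0 n0).
Qed.

Lemma divisorsM m k : (0 < m)%N -> (0 < k)%N -> coprime m k ->
  perm_eq (divisors (m * k)) [seq (d1 * d2)%N | d1 <- divisors m, d2 <- divisors k].
Proof.
move=> m0 k0 cmk.
have mk0 : (0 < m * k)%N by rewrite muln_gt0 m0.
apply: uniq_perm; first exact: divisors_uniq.
- apply: allpairs_uniq; [exact: divisors_uniq | exact: divisors_uniq |].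
  move=> [x1 y1] [x2 y2] /allpairsP [[a b] /= [Ha Hb [-> ->]]]
         /allpairsP [[c e] /= [Hc He [-> ->]]] /= Heq.
  move: Ha Hb Hc He; rewrite -!dvdn_divisors // => Ha Hb Hc He.
  have cmb : coprime m b := coprime_dvdr Hb cmk.
  have cme : coprime m e := coprime_dvdr He cmk.
  have cka : coprime k a by rewrite coprime_sym; apply: coprime_dvdl Ha cmk.
  have kc : coprime k c by rewrite coprime_sym; apply: coprime_dvdl Hc cmk.
  have E1 : a = c.
    by rewrite -(gcdn_idPr Ha) -(gcdn_idPr Hc) -(Gauss_gcdl a cmb) Heq Gauss_gcdl.
  have E2 : b = e.
    by rewrite -(gcdn_idPr Hb) -(gcdn_idPr He) -(Gauss_gcdr b cka) Heq Gauss_gcdr.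
  by rewrite E1 E2.
move=> d; rewrite -dvdn_divisors //; apply/idP/allpairsP.
- move=> Hd; exists (gcdn d m, gcdn d k) => /=.
  rewrite -!dvdn_divisors // dvdn_gcdr dvdn_gcdr; split => //.
  apply/eqP; rewrite eqn_dvd; apply/andP; split.
    rewrite muln_gcdl !muln_gcdr !dvdn_gcd.
    by rewrite Hd (dvdn_mulr _ (dvdnn d)) (dvdn_mulr _ (dvdnn d)) (dvdn_mull _ (dvdnn d)).
  rewrite Gauss_dvd ?dvdn_gcdl //.
  apply: (coprime_dvdl (dvdn_gcdr _ _)); apply: (coprime_dvdr (dvdn_gcdr _ _)) => //.
- move=> [[a b] /= [Ha Hb ->]].
  move: Ha Hb; rewrite -!dvdn_divisors // => Ha Hb.
  exact: dvdn_mul.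
Qed.

Section Gen.
Variable C : fieldType.

Lemma dconvM (u v : nat -> C) m k : (0 < m)%N -> (0 < k)%N -> coprime m k ->
  dconv u v (m * k) = \sum_(d1 <- divisors m) \sum_(d2 <- divisors k)
     u (d1 * d2)%N * v (m %/ d1 * (k %/ d2))%N.
Proof.
move=> m0 k0 cmk; rewrite /dconv (perm_big _ (divisorsM m0 k0 cmk)) big_allpairs_dep /=.
apply: eq_big_seq => d1 H1; apply: eq_big_seq => d2 H2.
move: (H1) (H2); rewrite -!dvdn_divisors // => D1 D2.
have p1 := divisors_pos m0 H1; have p2 := divisors_pos k0 H2.
congr (_ * v _).
rewrite -{1}(divnK D1) -{1}(divnK D2) mulnACA mulnK //.
by rewrite muln_gt0 p1.
Qed.

Lemma dconvC (u v : nat -> C) n : (0 < n)%N -> dconv u v n = dconv v u n.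
Proof.
move=> n0.
have K : forall d, (d %| n)%N -> (n %/ (n %/ d))%N = d.
  by move=> d D; rewrite divnA // mulKn.
have P : perm_eq (divisors n) [seq (n %/ d)%N | d <- divisors n].
  apply: uniq_perm; first exact: divisors_uniq.
  - rewrite map_inj_in_uniq ?divisors_uniq // => a b Ha Hb E.
    move: Ha Hb; rewrite -!dvdn_divisors // => Ha Hb.
    by rewrite -(K a Ha) E K.
  move=> d; apply/idP/mapP.
  - rewrite -dvdn_divisors // => D; exists (n %/ d)%N; last by rewrite K.
    by rewrite -dvdn_divisors // dvdn_div.
  - by move=> [e He ->]; rewrite -dvdn_divisors // dvdn_div // dvdn_divisors.
rewrite /dconv (perm_big _ P) big_map; apply: eq_big_seq => d.
by rewrite -dvdn_divisors // => D; rewrite K // mulrC.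
Qed.

Lemma primes_disj a b p : coprime a b -> p \in primes b -> p \notin primes a.
Proof.
move=> cab; rewrite !mem_primes => /and3P [pp b0 pb].
apply/negP => /and3P [_ a0 pa].
have : coprime p p.
  apply: (coprime_dvdr pa); apply: (coprime_dvdl pb); by rewrite coprime_sym.
by rewrite /coprime gcdnn => /eqP E; move: pp; rewrite E.
Qed.

Lemma logn_coprime_prime a b p : coprime a b -> p \in primes b -> logn p a = 0%N.
Proof.
move=> cab Hp; apply/eqP; rewrite -leqn0 leqNgt logn_gt0.
exact: primes_disj cab Hp.
Qed.

Lemma sum_primesM (G : nat -> nat -> C) a b : (0 < a)%N -> (0 < b)%N -> coprime a b ->
  \sum_(p <- primes (a * b)) G p (logn p (a * b)) =
  \sum_(p <- primes a) G p (logn p a) + \sum_(p <- primes b) G p (logn p b).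
Proof.
move=> a0 b0 cab.
have P : perm_eq (primes (a * b)) (primes a ++ primes b).
  apply: uniq_perm; first exact: primes_uniq.
  - rewrite cat_uniq !primes_uniq andbT /=; apply/hasPn => p Hp.
    exact: primes_disj cab Hp.
  - by move=> p; rewrite mem_cat primesM.
rewrite (perm_big _ P) big_cat /=; congr (_ + _); apply: eq_big_seq => p Hp.
  rewrite lognM //; have -> : logn p b = 0%N by apply: (logn_coprime_prime (b := a)) => //; rewrite coprime_sym.
  by rewrite addn0.
by rewrite lognM // (logn_coprime_prime cab Hp).
Qed.

Lemma PhiM (g : nat -> C) a b : (0 < a)%N -> (0 < b)%N -> coprime a b ->
  Phi g (a * b) = b%:R * Phi g a + a%:R * Phi g b.
Proof.
move=> a0 b0 cab; rewrite /Phi.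
rewrite (sum_primesM (fun p e => g (p ^ e)%N / (p ^ e)%:R) a0 b0 cab).
by rewrite natrM mulrDr !mulrA [b%:R * _]mulrC.
Qed.

Definition A (f g : nat -> C) := dconv f (Phi g).
Definition B (f : nat -> C) := dconv (@Idf C) f.

Lemma BM f m k : arith_multiplicative f -> (0 < m)%N -> (0 < k)%N -> coprime m k ->
  B f (m * k) = B f m * B f k.
Proof.
move=> fM m0 k0 cmk; rewrite /B dconvM // /dconv big_distrl; apply: eq_big_seq => d1 H1.
rewrite big_distrr; apply: eq_big_seq => d2 H2 /=.
move: (H1) (H2); rewrite -!dvdn_divisors // => D1 D2.
rewrite /Idf natrM fM ?divn_gt0 ?(dvdn_leq m0) ?(dvdn_leq k0) ?(divisors_pos m0 H1)
   ?(divisors_pos k0 H2) //.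
  by rewrite mulrACA.
apply: (coprime_dvdl (dvdn_div D1)); exact: (coprime_dvdr (dvdn_div D2)).
Qed.

Lemma AM f g m k : arith_multiplicative f -> (0 < m)%N -> (0 < k)%N -> coprime m k ->
  A f g (m * k) = A f g m * B f k + B f m * A f g k.
Proof.
move=> fM m0 k0 cmk; rewrite /B (dconvC _ _ k0) (dconvC _ _ m0).
rewrite /A dconvM // /dconv !big_distrlr -big_split; apply: eq_big_seq => d1 H1.
rewrite /= -big_split; apply: eq_big_seq => d2 H2 /=.
move: (H1) (H2); rewrite -!dvdn_divisors // => D1 D2.
have p1 := divisors_pos m0 H1; have p2 := divisors_pos k0 H2.
have q1 : (0 < m %/ d1)%N by rewrite divn_gt0 // dvdn_leq.
have q2 : (0 < k %/ d2)%N by rewrite divn_gt0 // dvdn_leq.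
rewrite fM //; last by apply: (coprime_dvdl D1); exact: (coprime_dvdr D2).
rewrite PhiM //; last by apply: (coprime_dvdl (dvdn_div D1)); exact: (coprime_dvdr (dvdn_div D2)).
rewrite /Idf mulrDr.
by congr (_ + _); ring.
Qed.


Lemma A1 f g : A f g 1 = 0.
Proof.
rewrite /A /dconv.
have -> : divisors 1 = [:: 1%N] by [].
by rewrite big_seq1 /Phi /= big_nil !mulr0.
Qed.

Lemma main_gen f g : arith_multiplicative f -> forall n, (0 < n)%N ->
  (forall p : nat, p \in primes n -> B f (p ^ logn p n)%N != 0) ->
  A f g n = B f n * \sum_(p <- primes n) A f g (p ^ logn p n)%N / B f (p ^ logn p n)%N.
Proof.
move=> fM k; elim: k.+1 {-2}k (ltnSn k) => // N IH n ltn n0 Hn.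
case: (ltnP 1 n) => n1; last first.
  have -> : n = 1%N by apply/eqP; rewrite eqn_leq n1 n0.
  by rewrite A1 big_nil mulr0.
set p := pdiv n.
have pp : prime p := pdiv_prime n1.
have [m cpm En] := pfactor_coprime pp n0.
set a := logn p n in En.
have pn : p \in primes n by rewrite mem_primes pp n0 pdiv_dvd.
have a0 : (0 < a)%N by rewrite logn_gt0.
have m0 : (0 < m)%N by move: n0; rewrite En muln_gt0 => /andP [].
have q1 : (1 < p ^ a)%N by rewrite -(expn0 p) ltn_exp2l // prime_gt1.
have q0 : (0 < p ^ a)%N by apply: ltnW.
have cmq : coprime m (p ^ a) by rewrite coprime_sym coprimeXl.
have mn : (m < N)%N.
  have H : (m < n)%N by rewrite {1}En; exact: ltn_Pmulr.
  by apply: leq_trans H _; rewrite -ltnS.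
have Hm : forall p' : nat, p' \in primes m -> B f (p' ^ logn p' m)%N != 0.
  move=> p' Hp'.
  have -> : logn p' m = logn p' n.
    rewrite En lognM //.
    have -> : logn p' (p ^ a) = 0%N.
      apply: (logn_coprime_prime (b := m)) => //; by rewrite coprime_sym.
    by rewrite addn0.
  by apply: Hn; rewrite En primesM // Hp'.
have IHm := IH m mn m0 Hm.
have Bq : B f (p ^ a) != 0 by apply: Hn.
have Pq : primes (p ^ a) = [:: p] by rewrite primesX // primes_prime.
rewrite En AM // BM // IHm.
rewrite (sum_primesM (fun p e => A f g (p ^ e)%N / B f (p ^ e)%N) m0 q0 cmq).
rewrite Pq big_seq1 pfactorK //.
rewrite mulrDr.
have E : B f m * B f (p ^ a) * (A f g (p ^ a) / B f (p ^ a)) = B f m * A f g (p ^ a).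
  by rewrite -mulrA [B f (p ^ a) * _]mulrC divfK.
by rewrite E mulrAC.
Qed.

End Gen.

Theorem corollary2p1 (R : realType) (f g : nat -> R[i]) (n : nat) :
  arith_multiplicative f -> (0 < n)%N ->
  (forall p : nat, p \in primes n -> dconv (@Idf _) f (p ^ logn p n)%N != 0) ->
  dconv f (Phi g) n =
    dconv (@Idf _) f n *
    \sum_(p <- primes n)
       dconv f (Phi g) (p ^ logn p n)%N / dconv (@Idf _) f (p ^ logn p n)%N.
Proof.
move=> fM n0 H; exact: (main_gen g fM n0 H).
Qed.
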